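(* Let $v_1,\dots,v_m\in\mathbb{C}^d$ with $m$ even, $\sum_{i=1}^m v_iv_i^*=\mathbb{I}$, $\|v_i\|^2=\alpha$ for all $i$, and $m\ge 49d^2$. Run Algorithm 2 (described in the context) on these vectors and let $A_{m/2}=\sum_{v\in\mathcal{A}_{m/2}}vv^*$ be the matrix corresponding to its output. Then \[ \log\det(\mathbb{I}-A_{m/2})\ge -d\log 2-\frac{2d^2}{m}. \]
   Context: Algorithm 2: set $A_0=\mathbf{0}_{d\times d}$, $\mathcal{A}_0=\emptyset$, $\mathcal{B}_0=\{v_1,\dots,v_m\}$. For $j=0,1,\dots,m/2-1$: choose $v_j\in\mathcal{B}_j$ minimising $v^*(\mathbb{I}-A_j)^{-1}v$ over $v\in\mathcal{B}_j$ (ties broken arbitrarily); set $A_{j+1}=A_j+v_jv_j^*$, $\mathcal{A}_{j+1}=\mathcal{A}_j\cup\{v_j\}$, $\mathcal{B}_{j+1}=\mathcal{B}_j\setminus\{v_j\}$. The output is $\mathcal{A}_{m/2}$. *)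

(* Defs.v *)
From HB Require Import structures.
From mathcomp Require Import all_boot all_order all_algebra.
From mathcomp Require Import complex.
From mathcomp Require Import reals exp.
Set Implicit Arguments. Unset Strict Implicit. Unset Printing Implicit Defensive.
Import Order.TTheory GRing.Theory Num.Theory.
Local Open Scope ring_scope.

Definition adjv (R : rcfType) (d : nat) (v : 'cV[R[i]]_d) : 'rV[R[i]]_d :=
  map_mx (@conjc R) v^T.

Definition outer (R : rcfType) (d : nat) (v : 'cV[R[i]]_d) : 'M[R[i]]_d :=
  v *m adjv v.

Definition qform (R : rcfType) (d : nat) (M : 'M[R[i]]_d) (v : 'cV[R[i]]_d) : R[i] :=
  (adjv v *m M *m v) 0 0.

Definition Apart (R : rcfType) (d m : nat) (v : 'I_m -> 'cV[R[i]]_d)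
  (s : seq 'I_m) (k : nat) : 'M[R[i]]_d :=
  \sum_(x <- take k s) outer (v x).

(* s (a sequence of indices into v_1..v_m, listed in order of selection) is a
   possible run of Algorithm 2: it has length m/2, no index is chosen twice,
   and at step k the chosen index minimises v^*(I - A_k)^{-1} v over the
   indices not yet chosen (ties broken arbitrarily).  The quantity
   v^*(I - A_k)^{-1} v is real since I - A_k is Hermitian; we compare real parts. *)
Definition alg2_run (R : rcfType) (d m : nat) (v : 'I_m -> 'cV[R[i]]_d)
  (s : seq 'I_m) : Prop :=
  [/\ size s = m./2, uniq s &
      forall k : nat, (k < m./2)%N ->
        forall x0 : 'I_m, forall x : 'I_m, x \notin take k s ->
          Re (qform (invmx (1%:M - Apart v s k)) (v (nth x0 s k)))
          <= Re (qform (invmx (1%:M - Apart v s k)) (v x))].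

(* Main.v *)
Require Import Defs.
From HB Require Import structures.
From mathcomp Require Import all_boot all_order all_algebra.
From mathcomp Require Import complex.
From mathcomp Require Import reals exp ring lra zify.
Import Order.TTheory GRing.Theory Num.Theory.
Local Open Scope ring_scope.
Lemma det_rank1 (F : comNzRingType) n (x : 'cV[F]_n) (u : 'rV[F]_n) :
  \det (1%:M - x *m u) = 1 - (u *m x) 0 0.
Proof.
pose B := block_mx (1%:M : 'M[F]_1) u x (1%:M : 'M[F]_n).
have E1 : B = block_mx 1%:M 0 x 1%:M *m block_mx 1%:M u 0 (1%:M - x *m u).
  rewrite mulmx_block ?mulmx1 ?mul1mx ?mul0mx ?mulmx0 ?addr0 ?add0r.
  by rewrite addrC subrK.
have E2 : B = block_mx (1%:M - u *m x) u 0 1%:M *m block_mx 1%:M 0 x 1%:M.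
  rewrite mulmx_block ?mulmx1 ?mul1mx ?mul0mx ?mulmx0 ?addr0 ?add0r.
  by rewrite subrK.
have := congr1 determinant E1; rewrite E2 !det_mulmx det_lblock det_ublock.
rewrite det_ublock !det1 !mul1r !mulr1 det_mx11 => <-.
by rewrite !mxE.
Qed.

Lemma det_upd (F : fieldType) n (M : 'M[F]_n) (x : 'cV[F]_n) (u : 'rV[F]_n) :
  M \in unitmx -> \det (M - x *m u) = \det M * (1 - (u *m invmx M *m x) 0 0).
Proof.
move=> Mu.
have -> : M - x *m u = M *m (1%:M - (invmx M *m x) *m u).
  by rewrite mulmxBr mulmx1 !mulmxA mulmxV // mul1mx.
by rewrite det_mulmx det_rank1 mulmxA.
Qed.

Lemma herm_det_real (R : rcfType) n (A : 'M[R[i]]_n) :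
  map_mx (@conjc R) A^T = A -> exists r : R, \det A = (r%:C)%C.
Proof.
move=> HA.
have : (\det A)^*%C = \det A.
  by rewrite -{2}HA det_map_mx det_tr.
case: (\det A) => a b /= [] /eqP.
rewrite -subr_eq0 -opprD oppr_eq0 -mulr2n mulrn_eq0 /= => /eqP ->.
by exists a.
Qed.

Lemma ln_lb (R : realType) (x : R) : 0 <= x -> x <= 2/49 -> - x - x ^+ 2 <= ln (1 - x).
Proof.
move=> x0 x1.
have a0 : 0 < 1 - x / 2 by lra.
have b0 : 0 < (1 - x) / (1 - x / 2) by apply: divr_gt0; lra.
have lnge : forall y : R, 0 < y -> 1 - y^-1 <= ln y.
  move=> y y0.
  have h1 : -1 < y^-1 - 1 by have := invr_gt0 y; rewrite y0; lra.
  have := le_ln1Dx h1.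
  have -> : 1 + (y^-1 - 1) = y^-1 by rewrite addrC subrK.
  rewrite lnV ?posrE //; lra.
have -> : 1 - x = (1 - x / 2) * ((1 - x) / (1 - x / 2)).
  by rewrite mulrC -mulrA mulVf ?mulr1 // gt_eqF.
rewrite lnM ?posrE //.
apply: le_trans (lerD (lnge _ a0) (lnge _ b0)).
rewrite invf_div.
have e1 : (1 - x / 2)^-1 = 2 / (2 - x).
  by field; lra.
have e2 : (1 - x / 2) / (1 - x) = (2 - x) / (2 - 2 * x).
  by field; lra.
rewrite e1 e2.
have d1 : 0 < 2 - x by lra.
have d2 : 0 < 2 - 2 * x by lra.
rewrite -subr_ge0.
have -> : 1 - 2 / (2 - x) + (1 - (2 - x) / (2 - 2 * x)) - (- x - x ^+ 2)
  = x ^+ 2 * (1 - 4 * x + 2 * x ^+ 2) / ((2 - x) * (2 - 2 * x)).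
  by field; lra.
apply: divr_ge0; last by apply: mulr_ge0; lra.
apply: mulr_ge0; first exact: sqr_ge0.
nra.
Qed.

Lemma inv_le_lndiff (R : realType) (n : R) : 1 < n -> n^-1 <= ln n - ln (n - 1).
Proof.
move=> n1.
have n0 : 0 < n by lra.
have n10 : 0 < n - 1 by lra.
rewrite -ln_div ?posrE //.
have := le_ln1Dx (x := - n^-1).
have -> : 1 + - n^-1 = (n - 1) / n by field; lra.
move=> H.
have : -1 < - n^-1.
  rewrite ltrN2 invf_lt1 //.
move/H; rewrite -[ln (n / (n-1))]opprK -lnV ?posrE ?divr_gt0 // invf_div; lra.
Qed.

Lemma rest_sum (R : rcfType) d m (v : 'I_m -> 'cV[R[i]]_d) (t : seq 'I_m) :
  uniq t -> \sum_(i < m) outer (v i) = 1%:M ->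
  \sum_(x | x \notin t) outer (v x) = 1%:M - \sum_(x <- t) outer (v x).
Proof.
move=> ut hs.
rewrite -hs (big_uniq _ ut); apply/eqP; rewrite eq_sym subr_eq.
by rewrite [X in X == _](bigID (fun x => x \in t)) /= addrC.
Qed.

Lemma herm_rest (R : rcfType) d m (v : 'I_m -> 'cV[R[i]]_d) (t : seq 'I_m) :
  map_mx (@conjc R) (1%:M - \sum_(x <- t) outer (v x))^T
   = 1%:M - \sum_(x <- t) outer (v x).
Proof.
apply/matrixP => i j; rewrite !mxE !summxE rmorphB rmorph_sum /=.
congr (_ - _).
  by case: eqP => [->|/eqP]; rewrite ?eqxx ?conjc1 // eq_sym => /negPf ->; rewrite conjc0.
apply: eq_bigr => x _; rewrite !mxE !big_ord1 !mxE rmorphM /= conjcK mulrC.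
by [].
Qed.

Lemma trace_sum (R : rcfType) d m (v : 'I_m -> 'cV[R[i]]_d) (P : pred 'I_m) N :
  \sum_(x | P x) qform N (v x) = \tr (N *m \sum_(x | P x) outer (v x)).
Proof.
rewrite mulmx_sumr raddf_sum /=.
apply: eq_bigr => x _.
rewrite /qform /outer.
have -> : (adjv (v x) *m N *m v x) 0 0 = \tr (adjv (v x) *m N *m v x).
  by rewrite /mxtrace big_ord1.
by rewrite [LHS]mxtrace_mulC [in LHS]mulmxA [LHS]mxtrace_mulC.
Qed.

Lemma card_rest m (t : seq 'I_m) : uniq t ->
  #|[pred x | x \notin t]| = (m - size t)%N.
Proof.
move=> ut; have := cardC (mem t); rewrite (card_uniqP ut) card_ord.
set c := (X in (_ + X)%N = _) => E.
have -> : #|[pred x | x \notin t]| = c.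
  by apply: eq_card => x; rewrite !inE.
clearbody c; move: E; move: (size t) => n E; lia.
Qed.

Lemma ReD (R : rcfType) (a b : R[i]) : complex.Re (a + b) = complex.Re a + complex.Re b.
Proof. by case: a b => [? ?] [? ?]. Qed.

Lemma Re_nat (R : rcfType) n : complex.Re (n%:R : R[i]) = n%:R.
Proof. by elim: n => [//|n IH]; rewrite !mulrS ReD IH. Qed.

Lemma Re_sum (R : rcfType) (I : finType) (P : pred I) (F : I -> R[i]) :
  complex.Re (\sum_(i | P i) F i) = \sum_(i | P i) complex.Re (F i).
Proof.
elim/big_rec2: _ => [//|i y1 y2 _ <-]; by rewrite ReD.
Qed.

Lemma two_sq (R : numDomainType) : (2 : R) ^+ 2 = 4.
Proof. by rewrite expr2 -natrM. Qed.

Lemma final_step (R : realType) (D lm ln0 ln1 k C lr lr' X X2 : R) :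
  - (D * (lm - ln0)) - k * C <= lr ->
  lr + (- X - X2) <= lr' ->
  X <= D * ln0 - D * ln1 ->
  X2 <= C ->
  - (D * (lm - ln1)) - (k + 1) * C <= lr'.
Proof. move=> h1 h2 h3 h4; rewrite !mulrBr mulrDl mul1r in h1 *; lra. Qed.

Lemma zero_case (R : realType) (a b c : R) (h : nat) (r : R) :
  - (0%:R * a) - h%:R * (4 * (0 ^ 2)%:R / b) <= ln r ->
  - (0%:R * ln 2) - 2 * (0 ^ 2)%:R / c <= ln r.
Proof.
by rewrite (_ : (0 ^ 2)%N = 0%N) // ?mulr0n ?mul0r ?mulr0 ?mul0r ?mulr0 ?oppr0 ?subr0.
Qed.

Lemma pos_case (R : realType) (d h : nat) (r : R) : (0 < h)%N ->
  - (d%:R * (ln (h + h)%:R - ln ((h + h) - h)%:R)) -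
     h%:R * (4 * (d ^ 2)%:R / (h + h)%:R ^+ 2) <= ln r ->
  - (d%:R * ln 2) - 2 * (d ^ 2)%:R / (h + h)%:R <= ln r.
Proof.
move=> hp; rewrite addnK.
have h0 : 0 < h%:R :> R by rewrite ltr0n.
have -> : ((h + h)%:R : R) = 2 * h%:R by rewrite natrD; lra.
rewrite lnM ?posrE // addrK.
have -> : h%:R * (4 * (d ^ 2)%:R / (2 * h%:R) ^+ 2) = 2 * (d ^ 2)%:R / (2 * h%:R) :> R.
  by field; rewrite gt_eqF.
by [].
Qed.

Lemma pos_h (d h : nat) : (0 < d)%N -> (49 * d ^ 2 <= h + h)%N -> (0 < h)%N.
Proof.
by case: d => // d' _; case: h => // ; rewrite leqn0 muln_eq0 expn_eq0.
Qed.

Theorem lemma4p1 (R : realType) (d m : nat) (v : 'I_m -> 'cV[R[i]]_d)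
  (alpha : R) (s : seq 'I_m) :
  ~~ odd m ->
  \sum_(i < m) outer (v i) = 1%:M ->
  (forall i : 'I_m, qform 1%:M (v i) = (alpha%:C)%C) ->
  (49 * d ^ 2 <= m)%N ->
  alg2_run v s ->
  exists r : R,
    [/\ \det (1%:M - \sum_(x <- s) outer (v x)) = (r%:C)%C, 0 < r &
        - (d%:R * ln 2) - 2 * (d ^ 2)%:R / m%:R <= ln r].
Proof.
move=> hev hs _ hm [hsz hun hmin].
set h := m./2 in hsz hmin.
have mE : m = (h + h)%N.
  by have := odd_double_half m; rewrite (negbTE hev) add0n -addnn.
pose M k := 1%:M - Apart v s k.
have Mk_sum : forall k, \sum_(x | x \notin take k s) outer (v x) = M k.
  by move=> k; rewrite /M /Apart rest_sum //; exact: take_uniq.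
have Mh : forall k, map_mx (@conjc R) (M k)^T = M k by move=> k; exact: herm_rest.
have claim : forall k, (k <= h)%N -> exists r : R, [/\ \det (M k) = (r%:C)%C, 0 < r &
   - (d%:R * (ln m%:R - ln (m - k)%:R)) - k%:R * (4 * (d ^ 2)%:R / m%:R ^+ 2) <= ln r].
  elim => [_|k IH hk].
    exists 1; split => //.
    - by rewrite /M /Apart take0 big_nil subr0 det1.
    - by rewrite subn0 subrr mulr0 oppr0 mul0r subr0 ln1.
  have [r [hdet r0 hln]] := IH (ltnW hk).
  have m0 : (0 < m)%N by lia.
  pose x0 := Ordinal m0.
  pose w := v (nth x0 s k).
  have ks : (k < size s)%N by rewrite hsz.
  have MS : M k.+1 = M k - w *m adjv w.
    rewrite /M /Apart (take_nth x0 ks) -cats1 big_cat big_seq1 /=.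
    by rewrite opprD addrA.
  have unitM : M k \in unitmx.
    by rewrite unitmxE hdet unitfE; apply/eqP => -[] /eqP; rewrite gt_eqF.
  have [r' hr'] := @herm_det_real _ _ _ (Mh k.+1).
  set q := qform (invmx (M k)) w.
  have hq : r' = r * (1 - complex.Re q).
    have := @det_upd _ _ _ w (adjv w) unitM; rewrite -MS hr' hdet.
    rewrite /q /qform; case: (_ 0 0) => a b.
    move/(congr1 (@complex.Re R)) => /= ->.
    by rewrite mul0r subr0.
  have hmin' : forall x : 'I_m, x \notin take k s ->
      complex.Re q <= complex.Re (qform (invmx (M k)) (v x)).
    move=> x hx; have := hmin k hk x0 x hx.
    by rewrite -!complexRe lecR.
  have sumq : \sum_(x | x \notin take k s) complex.Re (qform (invmx (M k)) (v x))
      = d%:R.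
    rewrite -Re_sum trace_sum Mk_sum mulVmx // mxtrace1.
    exact: Re_nat.
  have card_k : #|[pred x | x \notin take k s]| = (m - k)%N.
    rewrite card_rest ?take_uniq // size_takel //; exact: ltnW.
  have hqn : complex.Re q * (m - k)%:R <= d%:R.
    rewrite -sumq -card_k mulr_natr -sumr_const.
    by apply: ler_sum => x; rewrite inE; exact: hmin'.
  set n : R := (m - k)%:R in hln hqn.
  have n1 : 1 < n by rewrite /n ltr1n; lia.
  have n0 : 0 < n by lra.
  have hdd : (d <= d ^ 2)%N by rewrite expnS expn1; case: (posnP d) => [->|dp] //; rewrite leq_pmulr.
  have h49 : 49 * d%:R <= 2 * n :> R.
    have : (49 * d <= 2 * (m - k))%N by lia.
    by rewrite -(ler_nat R) !natrM.
  have hm2 : m%:R <= 2 * n :> R.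
    have : (m <= 2 * (m - k))%N by lia.
    by rewrite -(ler_nat R) !natrM.
  have mpos : 0 < m%:R :> R by rewrite ltr0n.
  have d0 : 0 <= d%:R :> R by [].
  set X := d%:R / n.
  have X0 : 0 <= X by apply: divr_ge0 => //; lra.
  have Xs : X <= 2 / 49.
    rewrite /X ler_pdivrMr // mulrAC ler_pdivlMr; lra.
  have hqX : complex.Re q <= X by rewrite /X ler_pdivlMr.
  have pos1 : 0 < 1 - complex.Re q by lra.
  exists r'; split => //.
    by rewrite hq; apply: mulr_gt0.
  have H2 : ln r + (- X - X ^+ 2) <= ln r'.
    rewrite hq lnM ?posrE // lerD2l.
    apply: le_trans (@ln_lb _ X X0 Xs) _.
    rewrite ler_ln ?posrE //; lra.
  have H3 : X <= d%:R * ln n - d%:R * ln (n - 1).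
    by rewrite -mulrBr /X ler_wpM2l //; apply: inv_le_lndiff.
  set C := 4 * (d ^ 2)%:R / m%:R ^+ 2.
  have H4 : X ^+ 2 <= C.
    pose Y : R := 2 * d%:R / m%:R.
    have XY : X <= Y.
      rewrite /X ler_pdivrMr // /Y mulrAC ler_pdivlMr //.
      apply: le_trans (ler_wpM2l d0 hm2) _.
      by rewrite mulrCA mulrA.
    have -> : C = Y ^+ 2.
      by rewrite /C /Y natrX expr_div_n exprMn two_sq.
    have Y0 : 0 <= Y by apply: le_trans X0 XY.
    by rewrite !expr2; apply: ler_pM.
  have e1 : (m - k.+1)%:R = n - 1 :> R.
    have km : (k < m)%N by rewrite mE; apply: ltn_addr.
    by rewrite /n -(subnSK km) -natr1 addrK.
  rewrite e1 -natr1.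
  exact: (@final_step _ _ _ _ _ _ _ _ _ _ _ hln H2 H3 H4).
have [r [hdet r0 hln]] := claim h (leqnn h).
exists r; split => //.
  by rewrite /M /Apart -hsz take_size in hdet.
move: hln; rewrite mE.
case: (posnP d) => [d0|dp].
  by rewrite d0; apply: zero_case.
apply: pos_case.
move: hm; rewrite mE; exact: pos_h.
Qed.
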